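(* Let $n\in\mathbb{N}$, $\sigma>0$, let $f:\mathbb{R}\to\mathbb{R}$ be smooth and odd, and let $F:\mathbb{R}\times X\to Y$, $F(\lambda,u)=-\Delta(\Delta u+\lambda f(u))-\lambda\sigma u$, so that $D_{uu}F(\lambda,u)[v,w]=-\Delta(\lambda f''(u)vw)$. Then for all $\lambda\in\mathbb{R}$ and $u\in X_a$: (i) $D_{uu}F(\lambda,u)[X_a,X_a]\subset Y_a$; (ii) $D_{uu}F(\lambda,u)[X_a\oplus X_b,X_a\oplus X_b]\subset Y_a\oplus Y_b$; (iii) $D_{uu}F(\lambda,u)[X_a,X_b]\subset Y_b$; (iv) $D_{uu}F(\lambda,u)[X_c,X_c]\subset Y_a\oplus Y_b$; (v) $D_{uu}F(\lambda,u)[X_a\oplus X_b,X_c]\subset Y_c$. (By symmetry of $D_{uu}F$ the order of the arguments in (iii) and (v) is irrelevant.)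
   Context: Let $\Omega=(0,1)$, $\Delta=d^2/dx^2$. $X=\{u\in H^2(\Omega): u'(0)=u'(1)=0,\ \int_\Omega u\,dx=0\}$; $Y=H^{-2}(\Omega)$ with norm $\|\Delta^{-1}u\|_{L^2}$, where $\Delta$ maps mean-zero $L^2(\Omega)$ isometrically onto $H^{-2}(\Omega)$. Let $H^2_{per}(\mathbb{R})$, $L^2_{per}(\mathbb{R})$ be the spaces of $2$-periodic functions in $H^2_{loc}$, resp. $L^2_{loc}$, with $\int_0^2v\,dx=0$. The extension of $w\in L^2(\Omega)$ is the $2$-periodic function equal to $w(x)$ on $[0,1]$ and $w(2-x)$ on $(1,2)$. For $W=H^2_{per}$ or $L^2_{per}$ let $(T_nv)(x)=-v(x+1/n)$, $W_a=N(T_n-I)$, $W_b=N(T_n^{n-1}+\dots+T_n+I)$, $W_c=N(T_n^n+I)$. For $\tau\in\{a,b,c\}$: $X_\tau=\{u\in X:\text{extension of }u\in W_\tau\subset H^2_{per}\}$, $Y_\tau=\{y\in Y:\text{extension of }\Delta^{-1}y\in W_\tau\subset L^2_{per}\}$. *)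

(* Defs.v *)
From HB Require Import structures.
From mathcomp Require Import all_boot all_order all_algebra.
From mathcomp Require Import all_classical all_reals all_analysis.
Set Implicit Arguments. Unset Strict Implicit. Unset Printing Implicit Defensive.
Import Order.TTheory GRing.Theory Num.Theory.
Import numFieldNormedType.Exports.
Local Open Scope classical_set_scope.
Local Open Scope ring_scope.

Section Defs.
Variable R : realType.
Local Notation mu := (@lebesgue_measure R).

Definition smooth (f : R -> R) : Prop :=
  forall (k : nat) (x : R), derivable (iter k (@derive1 R R) f) x 1.

Definition odd_fun (f : R -> R) : Prop := forall x, f (- x) = - f x.

Definition d2 (f : R -> R) : R -> R := derive1 (derive1 f).

Definition L2on (A : set R) (g : R -> R) : Prop :=
  measurable_fun A g /\ (\int[mu]_(x in A) ((g x) ^+ 2)%:E < +oo)%E.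

(* mean-zero L^2(0,1) (values outside [0,1] are irrelevant) *)
Definition L2_0 (g : R -> R) : Prop :=
  L2on `[0, 1]%classic g /\ \int[mu]_(x in `[0, 1]%classic) g x = 0.

(* X = { u in H^2(0,1) : u'(0) = u'(1) = 0, int u = 0 }.
   In one dimension u in H^2(0,1) iff (its continuous representative) satisfies
   u(x) = u(0) + int_0^x u1,  u1(x) = u1(0) + int_0^x g  with g in L^2(0,1);
   then u1 = u' on [0,1] and u'(0) = u1 0, u'(1) = u1 1. *)
Definition Xsp (u : R -> R) : Prop :=
  exists (u1 g : R -> R),
    L2on `[0, 1]%classic g /\
    (forall x, 0 <= x <= 1 ->
        u1 x = u1 0 + \int[mu]_(t in `[0, x]%classic) g t /\
        u x = u 0 + \int[mu]_(t in `[0, x]%classic) u1 t) /\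
    u1 0 = 0 /\ u1 1 = 0 /\
    \int[mu]_(x in `[0, 1]%classic) u x = 0.

Definition mod2 (x : R) : R := x - 2 * (Num.floor (x / 2))%:~R.

Definition ext (w : R -> R) : R -> R :=
  fun x => if mod2 x <= 1 then w (mod2 x) else w (2 - mod2 x).

Definition Tn (n : nat) (v : R -> R) : R -> R := fun x => - v (x + n%:R^-1).

Inductive sym := Sa | Sb | Sc.

Definition Weq (n : nat) (tau : sym) (v : R -> R) (x : R) : Prop :=
  match tau with
  | Sa => Tn n v x = v x
  | Sb => \sum_(k < n) iter k (Tn n) v x = 0
  | Sc => iter n (Tn n) v x = - v x
  end.

Definition L2per (v : R -> R) : Prop :=
  (forall x, v (x + 2) = v x) /\ measurable_fun setT v /\
  L2on `[0, 2]%classic v /\ \int[mu]_(x in `[0, 2]%classic) v x = 0.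

Definition WL2 (n : nat) (tau : sym) (v : R -> R) : Prop :=
  L2per v /\ {ae mu, forall x, Weq n tau v x}.

(* X_tau = { u in X : extension of u in W_tau subset H^2_per }.  For u in X
   the extension is automatically a (continuous) element of H^2_per, so the
   membership reduces to the defining equation, holding pointwise for the
   continuous representative. *)
Definition Xtau (n : nat) (tau : sym) (u : R -> R) : Prop :=
  Xsp u /\ forall x, Weq n tau (ext u) x.

(* direct sum of subspaces of X (elements of X are determined by [0,1]) *)
Definition Xsum (A B : (R -> R) -> Prop) (v : R -> R) : Prop :=
  exists v1 v2, A v1 /\ B v2 /\ forall x, 0 <= x <= 1 -> v x = v1 x + v2 x.

(* Test functions for H^{-2}: C^2 functions with phi'(0) = phi'(1) = 0
   (dense in the Neumann H^2 space). *)
Definition test_fn (phi : R -> R) : Prop :=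
  (forall x, derivable phi x 1) /\ (forall x, derivable (derive1 phi) x 1) /\
  continuous (d2 phi) /\ derive1 phi 0 = 0 /\ derive1 phi 1 = 0.

(* elements of Y = H^{-2}(0,1) are functionals on test functions *)
Definition distr := (R -> R) -> R.

Definition Yeq (y z : distr) : Prop := forall phi, test_fn phi -> y phi = z phi.

(* distributional (Neumann) Laplacian of h in L^2(0,1): phi |-> int h phi'' *)
Definition Lap (h : R -> R) : distr :=
  fun phi => \int[mu]_(x in `[0, 1]%classic) (h x * d2 phi x).

Definition Ysp (y : distr) : Prop := exists g, L2_0 g /\ Yeq y (Lap g).

(* Y_tau = { y in Y : extension of Delta^{-1} y in W_tau subset L^2_per };
   Delta^{-1} y is the (a.e. unique) mean-zero g with Delta g = y. *)
Definition Ytau (n : nat) (tau : sym) (y : distr) : Prop :=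
  exists g, L2_0 g /\ Yeq y (Lap g) /\ WL2 n tau (ext g).

Definition Ysum (A B : distr -> Prop) (y : distr) : Prop :=
  exists y1 y2, A y1 /\ B y2 /\ Yeq y (fun phi => y1 phi + y2 phi).

Definition DuuF (f : R -> R) (lam : R) (u v w : R -> R) : distr :=
  fun phi => - Lap (fun x => lam * d2 f (u x) * v x * w x) phi.

End Defs.

(* Main.v *)
Require Import Defs.
From HB Require Import structures.
From mathcomp Require Import all_boot all_order all_algebra.
From mathcomp Require Import all_classical all_reals all_analysis.
From mathcomp Require Import lra zify ring measurable_realfun.
Import Order.TTheory GRing.Theory Num.Theory.

Module Helpers.
Set Implicit Arguments. Unset Strict Implicit. Unset Printing Implicit Defensive.
Import numFieldNormedType.Exports.
Local Open Scope classical_set_scope.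
Local Open Scope ring_scope.
Section A.
Variable R : realType.

Definition tri (x : R) : R := if mod2 x <= 1 then mod2 x else 2 - mod2 x.

Lemma extE (w : R -> R) (x : R) : ext w x = w (tri x).
Proof. by rewrite /ext /tri; case: ifP. Qed.

Lemma mod2E (x : R) : exists j : int, mod2 x = x - 2 * j%:~R /\ 0 <= mod2 x < 2.
Proof.
exists (Num.floor (x / 2)); split => //.
have := floor_itv (x / 2); rewrite intrD /mod2.
set k := (Num.floor (x / 2))%:~R => /andP[h1 h2].
apply/andP; split; lra.
Qed.

Lemma tri_itv (x : R) : 0 <= tri x <= 1.
Proof.
have [j [_ /andP[h1 h2]]] := mod2E x.
rewrite /tri; case: ifP => h; apply/andP; split; lra.
Qed.

Lemma tri_exists (x : R) : exists k : int, tri x = `|x - 2 * k%:~R|.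
Proof.
have [j [e /andP[h1 h2]]] := mod2E x.
rewrite /tri; case: ifP => h.
  by exists j; rewrite -e ger0_norm.
exists (j + 1); rewrite intrD ltr0_norm; lra.
Qed.

Lemma tri_le (x : R) (k : int) : tri x <= `|x - 2 * k%:~R|.
Proof.
have [j [e /andP[h1 h2]]] := mod2E x.
have -> : x - 2 * k%:~R = mod2 x - 2 * (k - j)%:~R.
  by rewrite e intrB; lra.
have : (k - j <= -1 \/ k - j = 0 \/ k - j = 1 \/ 2 <= k - j)%R by lia.
move: (k - j) => d [hd|[->|[->|hd]]].
- have : d%:~R <= -1 :> R by rewrite -(ler_int R) in hd.
  move=> hd'; rewrite ger0_norm; last lra.
  rewrite /tri; case: ifP => _; lra.
- rewrite mulr0 subr0 ger0_norm // /tri; case: ifP => h; lra.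
- rewrite mulr1 ler0_norm; last lra.
  rewrite /tri; case: ifP => h; lra.
- have : 2 <= d%:~R :> R by rewrite -(ler_int R) in hd.
  move=> hd'; rewrite ler0_norm; last lra.
  rewrite /tri; case: ifP => _; lra.
Qed.

Lemma tri_lip (x y : R) : `|tri x - tri y| <= `|x - y|.
Proof.
have key : forall a b, tri a - tri b <= `|a - b|.
  move=> a b; have [k ek] := tri_exists b.
  have := tri_le a k; rewrite ek.
  have : `|a - 2 * k%:~R| <= `|a - b| + `|b - 2 * k%:~R|.
    have -> : a - 2 * k%:~R = (a - b) + (b - 2 * k%:~R) by lra.
    exact: ler_normD.
  lra.
rewrite ler_norml; apply/andP; split; last exact: key.
have := key y x; rewrite distrC; lra.
Qed.

Lemma tri_id (x : R) : 0 <= x <= 1 -> tri x = x.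
Proof.
move=> /andP[h0 h1]; apply/eqP; rewrite eq_le; apply/andP; split.
  by have := tri_le x 0; rewrite mulr0 subr0 ger0_norm.
have [k ->] := tri_exists x.
have : (k <= -1 \/ k = 0 \/ 1 <= k)%R by lia.
move=> [hk|[->|hk]].
- have : k%:~R <= -1 :> R by rewrite -(ler_int R) in hk.
  move=> hk'; rewrite ger0_norm; lra.
- by rewrite mulr0 subr0 ger0_norm.
- have : 1 <= k%:~R :> R by rewrite -(ler_int R) in hk.
  move=> hk'; rewrite ler0_norm; lra.
Qed.

Lemma tri_N (x : R) : tri (- x) = tri x.
Proof.
apply/eqP; rewrite eq_le; apply/andP; split.
  have [k ek] := tri_exists x.
  have := tri_le (- x) (- k); rewrite ek intrN.
  by rewrite (_ : - x - 2 * - k%:~R = - (x - 2 * k%:~R)) ?normrN //; lra.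
have [k ek] := tri_exists (- x).
have := tri_le x (- k); rewrite ek intrN.
by rewrite (_ : x - 2 * - k%:~R = - (- x - 2 * k%:~R)) ?normrN //; lra.
Qed.

Lemma tri_2 (x : R) : tri (x + 2) = tri x.
Proof.
apply/eqP; rewrite eq_le; apply/andP; split.
  have [k ek] := tri_exists x.
  have := tri_le (x + 2) (k + 1); rewrite ek intrD.
  by rewrite (_ : x + 2 - 2 * (k%:~R + 1) = x - 2 * k%:~R) //; lra.
have [k ek] := tri_exists (x + 2).
have := tri_le x (k - 1); rewrite ek intrB.
by rewrite (_ : x - 2 * (k%:~R - 1) = x + 2 - 2 * k%:~R) //; lra.
Qed.

Lemma tri_cont : continuous tri.
Proof.
move=> x; apply/cvgrPdist_lt => e e0.
near=> y.
apply: (le_lt_trans (tri_lip x y)).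
near: y.
exact: cvgr_dist_lt.
Unshelve. all: by end_near. Qed.


Lemma within_comp (A : set R) (g h : R -> R) : {within A, continuous g} ->
  continuous h -> (forall x, A (h x)) -> continuous (g \o h).
Proof.
move=> /subspace_continuousP cg ch hA x.
have := cg (h x) (hA x).
move=> gc; apply: cvg_trans gc.
move=> P /= HP.
have H2 : (h @ x) (fun z => A z -> P (g z)) by apply: ch; exact: HP.
move: H2; rewrite /=.
by apply: filterS => y /=; apply; exact: hA.
Qed.

Lemma ext_cont (g : R -> R) : {within `[0, 1], continuous g} -> continuous (ext g).
Proof.
move=> cg.
have -> : ext g = g \o tri by apply/funext => x; rewrite extE.
apply: within_comp cg tri_cont _ => x /=.
by rewrite in_itv /=; exact: tri_itv.
Qed.

Lemma ext_2 (g : R -> R) (x : R) : ext g (x + 2) = ext g x.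
Proof. by rewrite !extE tri_2. Qed.

Lemma ext_N (g : R -> R) (x : R) : ext g (- x) = ext g x.
Proof. by rewrite !extE tri_N. Qed.

Lemma ext_id (g : R -> R) (x : R) : 0 <= x <= 1 -> ext g x = g x.
Proof. by move=> h; rewrite extE tri_id. Qed.

Lemma per_nat (P : R -> R) : (forall x, P (x + 2) = P x) ->
  forall (m : nat) x, P (x + 2 * m%:R) = P x.
Proof.
move=> hP; elim=> [|m ih] x; first by rewrite mulr0 addr0.
rewrite -[RHS](ih x) -[RHS]hP; congr P; rewrite mulrSr; lra.
Qed.

Lemma per_int (P : R -> R) : (forall x, P (x + 2) = P x) ->
  forall (k : int) x, P (x + 2 * k%:~R) = P x.
Proof.
move=> hP [m|m] x; first exact: per_nat.
rewrite NegzE intrN -(per_nat hP m.+1 (x + 2 * - (m.+1)%:~R)).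
by congr P; rewrite -pmulrn; lra.
Qed.

Lemma tri_inv (P : R -> R) : (forall x, P (x + 2) = P x) ->
  (forall x, P (- x) = P x) -> forall x, P (tri x) = P x.
Proof.
move=> hP hN x; have [k ->] := tri_exists x.
have e : P (x - 2 * k%:~R) = P x.
  by rewrite -(per_int hP k (x - 2 * k%:~R)) subrK.
case: (lerP 0 (x - 2 * k%:~R)) => h.
  by rewrite ger0_norm.
by rewrite ltr0_norm // hN.
Qed.


Local Notation mu := (@lebesgue_measure R).

Section wc.
Variable A : set R.
Lemma wcD (f g : R -> R) : {within A, continuous f} -> {within A, continuous g} ->
  {within A, continuous (fun x => f x + g x)}.
Proof. by move=> cf cg x; apply: cvgD; [exact: cf|exact: cg]. Qed.
Lemma wcM (f g : R -> R) : {within A, continuous f} -> {within A, continuous g} ->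
  {within A, continuous (fun x => f x * g x)}.
Proof. by move=> cf cg x; apply: cvgM; [exact: cf|exact: cg]. Qed.
Lemma wcN (f : R -> R) : {within A, continuous f} ->
  {within A, continuous (fun x => - f x)}.
Proof. by move=> cf x; apply: cvgN; exact: cf. Qed.
Lemma wcC (c : R) : {within A, continuous (fun _ : R => c)}.
Proof. by move=> x; apply: cvg_cst. Qed.
Lemma wcO (f g : R -> R) : {within A, continuous f} -> continuous g ->
  {within A, continuous (fun x => g (f x))}.
Proof. by move=> cf cg x; apply: continuous_comp; [exact: cf| exact: cg]. Qed.
Lemma wcE (f g : R -> R) : {within A, continuous f} -> {in A, f =1 g} ->
  {within A, continuous g}.
Proof. by move=> cf e; exact: (subspace_eq_continuous e cf). Qed.
Lemma wcT (f : R -> R) : continuous f -> {within A, continuous f}.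
Proof. by move=> cf; apply: continuous_subspaceT. Qed.
End wc.

Lemma L2_int (g : R -> R) : L2on `[0, 1] g -> mu.-integrable `[0, 1] (EFin \o g).
Proof.
move=> [mg ig].
have i2 : mu.-integrable `[0, 1] (EFin \o (fun x => 1 + g x ^+ 2)).
  have -> : EFin \o (fun x => 1 + g x ^+ 2) =
     (EFin \o cst 1) \+ (EFin \o (fun x => g x ^+ 2)).
    by apply/funext => x.
  apply: integrableD => //.
    by apply: continuous_compact_integrable; [exact: segment_compact|exact: wcC].
  apply/integrableP; split.
    by apply/measurable_EFinP; exact: measurable_funX.
  apply: le_lt_trans ig; rewrite le_eqVlt; apply/orP; left; apply/eqP.
  by apply: eq_integral => x _ /=; rewrite ger0_norm // sqr_ge0.
apply: le_integrable i2 => //.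
  exact/measurable_EFinP.
move=> x _ /=; rewrite lee_fin.
rewrite [X in _ <= X]ger0_norm; last by rewrite addr_ge0 // sqr_ge0.
have h1 := sqr_ge0 (`|g x| - 1); have h2 : `|g x| ^+ 2 = g x ^+ 2 by rewrite real_normK // num_real.
have h3 := normr_ge0 (g x).
nra.
Qed.


Lemma int_cont (g : R -> R) (c : R) : mu.-integrable `[0, 1] (EFin \o g) ->
  {within `[0, 1], continuous (fun x => c + \int[mu]_(t in `[0, x]) g t)}.
Proof.
move=> ig; apply: wcD; first exact: wcC.
exact: (@parameterized_integral_continuous R 0 1 g ler01 ig).
Qed.

Lemma Xsp_cont (u : R -> R) : Xsp u -> {within `[0, 1], continuous u}.
Proof.
move=> [u1 [g [Lg [rep _]]]].
have c1 : {within `[0, 1], continuous u1}.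
  apply: (wcE (int_cont (c := u1 0) (L2_int Lg))).
  move=> x; rewrite inE /= in_itv /= => hx.
  by rewrite (rep x hx).1.
have iu1 : mu.-integrable `[0, 1] (EFin \o u1).
  by apply: continuous_compact_integrable c1; exact: segment_compact.
apply: (wcE (int_cont (c := u 0) iu1)).
move=> x; rewrite inE /= in_itv /= => hx.
by rewrite (rep x hx).2.
Qed.


Lemma der_refl (p : R -> R) (x : R) : (forall y, derivable p y 1) ->
  derive1 (fun y => p (- y)) x = - derive1 p (- x).
Proof.
move=> dp.
have -> : (fun y => p (- y)) = p \o (@GRing.opp R) by [].
rewrite derive1_comp; [|exact: derivable_opp|exact: dp].
have -> : derive1 (@GRing.opp R) x = -1 by rewrite derive1E derive_val.
by rewrite mulrN1.
Qed.

Lemma d2_cont (f : R -> R) : smooth f -> continuous (d2 f).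
Proof.
move=> sf x; apply: differentiable_continuous; apply/derivable1_diffP.
exact: (sf 2%N x).
Qed.

Lemma d2_odd (f : R -> R) : smooth f -> odd_fun f -> forall y, d2 f (- y) = - d2 f y.
Proof.
move=> sf hf.
have d0 : forall y, derivable f y 1 by move=> y; exact: (sf 0%N y).
have d1 : forall y, derivable (derive1 f) y 1 by move=> y; exact: (sf 1%N y).
have e1 : forall y, derive1 f (- y) = derive1 f y.
  move=> y; have := der_refl y d0.
  have -> : (fun z => f (- z)) = - f by apply/funext => z; rewrite hf.
  by rewrite derive1N // => /eqP; rewrite eqr_opp => /eqP.
move=> y; have := der_refl y d1.
have -> : (fun z => derive1 f (- z)) = derive1 f by apply/funext => z; rewrite e1.
rewrite /d2 => ->; by rewrite opprK.
Qed.


Lemma cint (H : R -> R) (a b : R) : continuous H ->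
  mu.-integrable `[a, b] (EFin \o H).
Proof.
by move=> cH; apply: continuous_compact_integrable;
  [exact: segment_compact | exact: wcT].
Qed.

Lemma int_split (H : R -> R) (a x b : R) : a <= x -> x <= b -> continuous H ->
  \int[mu]_(t in `[a, b]) H t =
  \int[mu]_(t in `[a, x]) H t + \int[mu]_(t in `[x, b]) H t.
Proof.
move=> ax xb cH.
have := @Rintegral_itvB R H (BLeft a) (BRight b) x (cint a b cH).
rewrite !bnd_simp => /(_ ax xb) e.
rewrite Rintegral_itv_obnd_cbnd in e; last first.
  by apply: integrableS (cint x b cH) => //; apply: subset_itv; rewrite bnd_simp.
by rewrite -e addrC subrK.
Qed.

Lemma int_shift (H : R -> R) (a b c : R) : a <= b -> continuous H ->
  \int[mu]_(t in `[a + c, b + c]) H t = \int[mu]_(t in `[a, b]) H (t + c).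
Proof.
move=> ab cH.
have dF : derive1 (fun x : R => x + c) = cst 1.
  by apply/funext => x; rewrite derive1E (_ : (fun x => x + c) = shift c) // (congr1 (fun F => F x) (derive_shift 1 c)).
rewrite /Rintegral; congr fine.
rewrite (@integration_by_substitution_increasing R (fun x => x + c) H a b) //.
- by apply: eq_integral => x _; rewrite dF /= mulr1.
- by move=> x y _ _; rewrite ltrD2r.
- by rewrite dF => x _; exact: cst_continuous.
- by rewrite dF; exact: is_cvg_cst.
- by rewrite dF; exact: is_cvg_cst.
- split.
  + by move=> x _; apply: derivableD => //; exact: derivable_id.
  + by apply: cvg_at_right_filter; apply: cvgD => //; exact: cvg_cst.
  + by apply: cvg_at_left_filter; apply: cvgD => //; exact: cvg_cst.
- exact: wcT.
Qed.

Lemma int_opp (H : R -> R) (a b : R) : a <= b -> continuous H ->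
  \int[mu]_(t in `[- b, - a]) H t = \int[mu]_(t in `[a, b]) H (- t).
Proof.
move=> ab cH; rewrite /Rintegral; congr fine.
by rewrite integration_by_substitution_oppr //; exact: wcT.
Qed.


Lemma int_per (H : R -> R) (c : R) : continuous H -> (forall x, H (x + 2) = H x) ->
  0 <= c <= 2 ->
  \int[mu]_(t in `[0, 2]) H (t + c) = \int[mu]_(t in `[0, 2]) H t.
Proof.
move=> cH pH /andP[c0 c2].
rewrite -int_shift // add0r (int_split (x := 2)) //; last by lra.
rewrite [in RHS](int_split (x := c)) // addrC; congr (_ + _).
rewrite -{1}(add0r 2) [X in `[_, X]]addrC int_shift //.
by apply: eq_Rintegral => x _; rewrite pH.
Qed.

Lemma int_refl (H : R -> R) : continuous H -> (forall x, H (x + 2) = H x) ->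
  (forall x, H (- x) = H x) ->
  \int[mu]_(t in `[0, 2]) H t = 2 * \int[mu]_(t in `[0, 1]) H t.
Proof.
move=> cH pH eH.
rewrite (int_split (x := 1)) //; try lra.
suff -> : \int[mu]_(t in `[1, 2]) H t = \int[mu]_(t in `[0, 1]) H t by lra.
have := @int_opp H (-2) (-1); rewrite !opprK => -> //; last by lra.
transitivity (\int[mu]_(t in `[-2, -1]) H (t + 2)).
  by apply: eq_Rintegral => x _; rewrite eH pH.
rewrite -int_shift //; last by lra.
have -> : -2 + 2 = 0 :> R by lra.
by have -> : -1 + 2 = 1 :> R by lra.
Qed.


Lemma wint (g : R -> R) (a b : R) : {within `[a, b], continuous g} ->
  mu.-integrable `[a, b] (EFin \o g).
Proof.
by move=> cg; apply: continuous_compact_integrable => //; exact: segment_compact.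
Qed.

Lemma L2on_cont (g : R -> R) (a b : R) : {within `[a, b], continuous g} ->
  L2on `[a, b] g.
Proof.
move=> cg; split.
  by have /integrableP[/measurable_EFinP] := wint cg.
have /integrableP[_ fin] := wint (wcM cg cg).
apply: le_lt_trans fin; rewrite le_eqVlt; apply/orP; left; apply/eqP.
by apply: eq_integral => x _ /=; rewrite expr2 ger0_norm // -expr2 sqr_ge0.
Qed.

End A.

Section B.
Variable R : realType.
Local Notation mu := (@lebesgue_measure R).

Lemma int_d2 (phi : R -> R) : test_fn phi ->
  \int[mu]_(x in `[0, 1]) d2 phi x = 0.
Proof.
move=> [d0 [d1 [c2 [e0 e1]]]].
have cF : continuous (derive1 phi).
  by move=> x; apply: differentiable_continuous; apply/derivable1_diffP.
have := (@continuous_FTC2 R (d2 phi) (derive1 phi) 0 1 ltr01).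
move=> /(_ (wcT c2)) H.
have H2 : derivable_oo_LRcontinuous (derive1 phi) 0 1.
  split.
  + by move=> x _; exact: d1.
  + exact: cvg_at_right_filter (cF 0).
  + exact: cvg_at_left_filter (cF 1).
rewrite /Rintegral (H H2) //.
by rewrite e0 e1 -EFinB subrr.
Qed.
Lemma Yeq_shift (h : R -> R) (c : R) : {within `[0, 1], continuous h} ->
  Yeq (fun phi => - Lap h phi) (Lap (fun x => c - h x)).
Proof.
move=> ch phi tp; have cp : {within `[0, 1], continuous (d2 phi)}.
  by apply: wcT; case: tp => _ [_ []].
rewrite /Lap.
under [RHS]eq_Rintegral do rewrite mulrBl.
rewrite RintegralB //; [|exact/wint/wcM/cp/wcC|exact/wint/wcM].
by rewrite RintegralZl ?int_d2 ?mulr0 ?add0r //; exact: wint.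
Qed.


Lemma mkY (n : nat) (tau : sym) (g : R -> R) (y : distr R) :
  {within `[0, 1], continuous g} -> \int[mu]_(x in `[0, 1]) g x = 0 ->
  (forall x, Weq n tau (ext g) x) -> Yeq y (Lap g) -> Ytau n tau y.
Proof.
move=> cg g0 hW hy; exists g; split; first by split => //; exact: L2on_cont.
split => //; split; last exact: aeW.
have ce := ext_cont cg.
split; first exact: ext_2.
split; first exact: continuous_measurable_fun.
split; first exact/L2on_cont/wcT.
rewrite int_refl //; [|exact: ext_2|exact: ext_N].
have -> : \int[mu]_(x in `[0, 1]) ext g x = \int[mu]_(x in `[0, 1]) g x.
  by apply: eq_Rintegral => x; rewrite inE /= in_itv /= => hx; rewrite ext_id.
by rewrite g0 mulr0.
Qed.


Lemma int01_sub (h : R -> R) (c : R) : {within `[0, 1], continuous h} ->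
  \int[mu]_(x in `[0, 1]) (c - h x) = c - \int[mu]_(x in `[0, 1]) h x.
Proof.
move=> ch; rewrite RintegralB //; [|exact/wint/wcC|exact/wint].
have m1 : mu `[0, 1] = 1%:E by rewrite lebesgue_measure_itv /= lte_fin ltr01 -EFinD subr0.
rewrite Rintegral_cst // (_ : fine _ = 1) ?mulr1 //.
by move: m1 => /= ->.
Qed.

Lemma Yeq_sum (h g1 g2 : R -> R) (c : R) : {within `[0, 1], continuous h} ->
  {within `[0, 1], continuous g1} -> {within `[0, 1], continuous g2} ->
  (forall x, 0 <= x <= 1 -> g1 x + g2 x = c - h x) ->
  Yeq (fun phi => - Lap h phi) (fun phi => Lap g1 phi + Lap g2 phi).
Proof.
move=> ch c1 c2 e phi tp.
have cp : {within `[0, 1], continuous (d2 phi)}.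
  by apply: wcT; case: tp => _ [_ []].
rewrite (Yeq_shift c ch tp) /Lap -RintegralD //; [|exact/wint/wcM|exact/wint/wcM].
apply: eq_Rintegral => x; rewrite inE /= in_itv /= => hx.
by rewrite -mulrDl e.
Qed.
End B.

Section C.
Variable R : realType.
Variable n : nat.
Hypothesis hn : (0 < n)%N.
Local Notation d := (n%:R^-1 : R).
Local Notation s := ((-1) ^+ n : R).

Lemma nd1 : n%:R * d = 1.
Proof. by rewrite mulfV // pnatr_eq0 -lt0n. Qed.

Lemma d_itv : 0 <= d <= 2.
Proof.
have h1 : 1 <= n%:R :> R by rewrite ler1n.
have h2 : 0 < d by rewrite invr_gt0 ltr0n.
have := nd1 => e; apply/andP; split; nra.
Qed.

Lemma ss : s * s = 1.
Proof. by rewrite -exprMn mulrNN mulr1 expr1n. Qed.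

Lemma iterT k (V : R -> R) x : iter k (Tn n) V x = (-1) ^+ k * V (x + k%:R * d).
Proof.
elim: k x => [|k ih] x /=; first by rewrite expr0 mul1r mul0r addr0.
rewrite /Tn ih exprS mulN1r mulNr; congr (- (_ * V _)).
rewrite mulrSr; ring.
Qed.

Lemma WeqA (V : R -> R) x : Weq n Sa V x <-> - V (x + d) = V x.
Proof. by []. Qed.

Lemma WeqB (V : R -> R) x : Weq n Sb V x <->
  \sum_(k < n) (-1) ^+ k * V (x + k%:R * d) = 0.
Proof. by rewrite /Weq; under eq_bigr do rewrite iterT. Qed.

Lemma WeqC (V : R -> R) x : Weq n Sc V x <-> s * V (x + 1) = - V x.
Proof. by rewrite /Weq iterT nd1. Qed.

Lemma a_k (V : R -> R) : (forall x, V (x + d) = - V x) ->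
  forall k x, V (x + k%:R * d) = (-1) ^+ k * V x.
Proof.
move=> hV; elim=> [|k ih] x; first by rewrite mul0r addr0 expr0 mul1r.
rewrite exprS mulN1r mulNr -ih -hV; congr V; rewrite mulrSr; ring.
Qed.

Lemma a_1 (V : R -> R) : (forall x, V (x + d) = - V x) ->
  forall x, V (x + 1) = s * V x.
Proof. by move=> hV x; have := a_k hV n x; rewrite nd1. Qed.

Lemma b_1 (V : R -> R) : (forall x, Weq n Sb V x) ->
  forall x, V (x + 1) = s * V x.
Proof.
move=> hV x.
have A0 := proj1 (WeqB V x) (hV x).
have A1 := proj1 (WeqB V (x + d)) (hV (x + d)).
move: hn A0 A1; case: n => // m _.
rewrite big_ord_recl big_ord_recr /= => A0 A1.
have e : \sum_(i < m) (-1) ^+ (bump 0 i) * V (x + (bump 0 i)%:R * m.+1%:R^-1) =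
   - \sum_(i < m) (-1) ^+ i * V (x + m.+1%:R^-1 + i%:R * m.+1%:R^-1).
  rewrite -sumrN; apply: eq_bigr => i _.
  rewrite /bump /= add1n exprS mulN1r mulNr; congr (- (_ * V _)).
  rewrite mulrSr; ring.
rewrite e in A0.
have em : x + m.+1%:R^-1 + m%:R * m.+1%:R^-1 = x + 1.
  have h : (m%:R + 1) * m.+1%:R^-1 = 1 :> R by rewrite natr1 mulfV // pnatr_eq0.
  by rewrite -[in RHS]h; ring.
rewrite em in A1.
have hs : (-1) ^+ m.+1 = - (-1) ^+ m :> R by rewrite exprS mulN1r.
rewrite hs.
have sm : (-1) ^+ m * (-1) ^+ m = 1 :> R by rewrite -exprMn mulrNN mulr1 expr1n.
rewrite expr0 mul1r in A0.
set S := \sum_(i < m) _ in A0 A1.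
have : (-1) ^+ m * V (x + 1) = - V x by rewrite mul0r addr0 in A0; lra.
move/(congr1 (fun z => (-1) ^+ m * z)); rewrite mulrA sm mul1r => ->; ring.
Qed.

Lemma c_1 (V : R -> R) : (forall x, Weq n Sc V x) ->
  forall x, V (x + 1) = - s * V x.
Proof.
move=> hV x; have := proj1 (WeqC V x) (hV x).
move/(congr1 (fun z => s * z)); rewrite mulrA ss mul1r => ->; ring.
Qed.

Lemma sig2 : 2 * \sum_(k < n) (-1) ^+ k = 1 - s :> R.
Proof.
elim: n => [|m ih]; first by rewrite big_ord0 expr0 mulr0 subrr.
rewrite big_ord_recr /= mulrDr ih exprS; lra.
Qed.

Lemma odd_sign (p : R -> R) : (forall y, p (- y) = - p y) ->
  forall k y, p ((-1) ^+ k * y) = (-1) ^+ k * p y.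
Proof.
move=> hp; elim=> [|k ih] y; first by rewrite expr0 !mul1r.
by rewrite exprS mulN1r !mulNr hp ih.
Qed.

End C.

Section D.
Variable R : realType.

Lemma cont_sum m (F : nat -> R -> R) : (forall i, continuous (F i)) ->
  continuous (fun x => \sum_(i < m) F i x).
Proof.
move=> cF; elim: m => [|m ih].
  by under eq_fun do rewrite big_ord0; exact: cst_continuous.
under eq_fun do rewrite big_ord_recr /=.
by move=> x; apply: continuousD; [exact: ih|exact: cF].
Qed.

Lemma sgn_eq (a b : nat) : odd a = odd b -> (-1) ^+ a = (-1) ^+ b :> R.
Proof. by move=> h; rewrite -signr_odd h signr_odd. Qed.

Lemma shift_sum m (G : R -> R) (t x : R) :
  (forall y, G (y + m.+1%:R * t) = (-1) ^+ m.+1 * G y) ->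
  \sum_(k < m.+1) (-1) ^+ k * G (x + t + k%:R * t) =
  - \sum_(k < m.+1) (-1) ^+ k * G (x + k%:R * t).
Proof.
move=> hG.
rewrite big_ord_recr big_ord_recl /= opprD -sumrN expr0 mul1r mul0r addr0.
have -> : x + t + m%:R * t = x + m.+1%:R * t by rewrite mulrSr; ring.
rewrite hG mulrA -exprD (sgn_eq (b := 1)); last by rewrite addnS /= oddD addbb.
rewrite expr1 mulN1r addrC; congr (_ + _).
apply: eq_bigr => i _; rewrite /bump /= add1n exprS mulN1r mulNr opprK.
by congr (_ * G _); rewrite mulrSr; ring.
Qed.

Lemma rev_sum m (G : R -> R) (t x : R) :
  (forall y, G (y + m.+1%:R * t) = (-1) ^+ m.+1 * G y) ->
  \sum_(k < m.+1) (-1) ^+ k * G (x - k%:R * t) =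
  \sum_(k < m.+1) (-1) ^+ k * G (x + k%:R * t).
Proof.
move=> hG.
have hG' : forall y, G y = (-1) ^+ m.+1 * G (y + m.+1%:R * t).
  move=> y; rewrite hG mulrA -exprD (sgn_eq (b := 0)) ?expr0 ?mul1r //.
  by rewrite oddD addbb.
rewrite !big_ord_recl /= !mul0r subr0 addr0; congr (_ + _).
rewrite [RHS](reindex_inj rev_ord_inj) /=.
apply: eq_bigr => i _; rewrite /bump /= !add1n.
rewrite hG' mulrA; congr (_ * G _).
  rewrite -!exprD; apply: sgn_eq; have hi : (i <= m)%N by apply: ltnW.
  move: (ltn_ord i); move: (nat_of_ord i) => j hj.
  set k := (m - j.+1)%N; have -> : m = (k + j.+1)%N by rewrite subnK.
  by rewrite !addnS !addSn /= !oddD; case: (odd j); case: (odd k).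
rewrite -subSn ?(ltn_ord i) // subSS natrB; last exact: ltnW.
by rewrite !mulrSr; ring.
Qed.

End D.

Section E.
Variable R : realType.
Local Notation mu := (@lebesgue_measure R).

Lemma meanH (H : R -> R) (e a : R) : continuous H -> (forall x, H (x + 2) = H x) ->
  0 <= e <= 2 -> (forall x, H (x + e) = a * H x) ->
  (1 - a) * \int[mu]_(t in `[0, 2]) H t = 0.
Proof.
move=> cH pH he hs; have := int_per cH pH he.
have -> : \int[mu]_(t in `[0, 2]) H (t + e) = \int[mu]_(t in `[0, 2]) (a * H t).
  by apply: eq_Rintegral => x _; exact: hs.
by rewrite RintegralZl //; [move=> h; rewrite mulrBl mul1r h subrr|exact: cint].
Qed.

Lemma mean01 (h : R -> R) (e a : R) : {within `[0, 1], continuous h} ->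
  0 <= e <= 2 -> (forall x, ext h (x + e) = a * ext h x) ->
  (1 - a) * \int[mu]_(t in `[0, 1]) h t = 0.
Proof.
move=> ch he hs.
have := meanH (ext_cont ch) (@ext_2 _ h) he hs.
rewrite int_refl //; [|exact: ext_cont|exact: ext_2|exact: ext_N].
have -> : \int[mu]_(x in `[0, 1]) ext h x = \int[mu]_(x in `[0, 1]) h x.
  by apply: eq_Rintegral => x; rewrite inE /= in_itv /= => hx; rewrite ext_id.
lra.
Qed.


Lemma key_ab (n : nat) (h : R -> R) : (0 < n)%N -> {within `[0, 1], continuous h} ->
  (forall x, ext h (x + 1) = (-1) ^+ n * ext h x) ->
  Ysum (Ytau n Sa) (Ytau n Sb) (fun phi => - Lap h phi).
Proof.
move=> hn ch sH.
set H := ext h.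
have cH : continuous H := ext_cont ch.
have pH : forall x, H (x + 2) = H x := @ext_2 _ h.
have eH : forall x, H (- x) = H x := @ext_N _ h.
set c := \int[mu]_(t in `[0, 1]) h t.
have hc : (1 - (-1) ^+ n) * c = 0.
  by apply: (mean01 ch) => //; rewrite ler01 ler1n.
set d : R := n%:R^-1.
have nd : n%:R * d = 1 := nd1 R hn.
pose P x := d * \sum_(k < n) (-1) ^+ k * H (x + k%:R * d).
have hHn : forall y, H (y + n%:R * d) = (-1) ^+ n * H y by move=> y; rewrite nd; exact: sH.
have Pshift : forall x, P (x + d) = - P x.
  move=> x; rewrite /P -mulrN; congr (_ * _).
  by move: hHn; case: (n) hn => // m _; exact: shift_sum.
have Peven : forall x, P (- x) = P x.
  move=> x; rewrite /P; congr (_ * _).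
  have -> : \sum_(k < n) (-1) ^+ k * H (- x + k%:R * d) =
            \sum_(k < n) (-1) ^+ k * H (x - k%:R * d).
    by apply: eq_bigr => i _; congr (_ * _); rewrite -[LHS]eH; congr H; ring.
  by move: hHn; case: (n) hn => // m _; exact: rev_sum.
have Pper : forall x, P (x + 2) = P x.
  move=> x; rewrite /P; congr (_ * _); apply: eq_bigr => i _.
  by congr (_ * _); rewrite -[RHS]pH; congr H; ring.
have Pcont : continuous P.
  have cs : continuous (fun y => \sum_(k < n) (-1) ^+ k * H (y + k%:R * d)).
    apply: (@cont_sum R n (fun k y => (-1) ^+ k * H (y + k%:R * d))) => k y.
    apply: cvgM; first exact: cvg_cst.
    have c1 : {for y, continuous (fun z => z + k%:R * d)}.
      by apply: cvgD; [exact: cvg_id|exact: cvg_cst].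
    exact: (continuous_comp c1 (cH _)).
  by move=> x; apply: cvgM; [exact: cvg_cst|exact: cs].
have Ptri : forall x, P (tri x) = P x by exact: tri_inv.
have dI : 0 <= d <= 2 := d_itv R hn.
have P0 : \int[mu]_(t in `[0, 1]) P t = 0.
  have Psh' : forall x, P (x + d) = -1 * P x by move=> x; rewrite Pshift mulN1r.
  have := meanH Pcont Pper dI Psh'.
  rewrite int_refl //; lra.
have cP : {within `[0, 1], continuous P} by exact: wcT.
pose g1 x := 0 - P x.
pose g2 x := (c - h x) + P x.
have cg1 : {within `[0, 1], continuous g1} by apply: wcD; [exact: wcC|exact: wcN].
have cg2 : {within `[0, 1], continuous g2}.
  by apply: wcD => //; apply: wcD; [exact: wcC|exact: wcN].
have e1 : forall x, ext g1 x = - P x by move=> x; rewrite extE /g1 Ptri sub0r.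
have e2 : forall x, ext g2 x = c - H x + P x by move=> x; rewrite extE /g2 Ptri /H extE.
exists (Lap g1), (Lap g2); split; [|split].
- apply: (mkY cg1) => //.
    by rewrite int01_sub // P0 subrr.
  by move=> x; apply/WeqA; rewrite !e1 Pshift opprK.
- apply: (mkY cg2) => //.
    rewrite /g2 RintegralD //; last 2 first.
    - by apply: wint; apply: wcD; [exact: wcC|exact: wcN].
    - exact: wint.
    by rewrite int01_sub // P0 subrr addr0.
  move=> x; apply/WeqB.
  under eq_bigr do rewrite e2.
  have Pk := a_k Pshift.
  have sq : forall i : nat, (-1) ^+ i * (-1) ^+ i = 1 :> R.
    by move=> i; rewrite -exprMn mulrNN mulr1 expr1n.
  under eq_bigr => i _ do rewrite Pk mulrDr mulrBr mulrA sq mul1r.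
  rewrite big_split /= sumrB -mulr_suml sumr_const card_ord -[P x *+ n]mulr_natl /P mulrA nd mul1r.
  have := sig2 R n; move: (\sum_(i < n) (-1) ^+ i) => sg hsg.
  have -> : sg * c = 0 by nra.
  set S := \sum_(i < n) _; lra.
- apply: (Yeq_sum (c := c) ch cg1 cg2) => x hx.
  by rewrite /g1 /g2; ring.
Qed.

End E.

Section F.
Variable R : realType.
Local Notation mu := (@lebesgue_measure R).

Lemma partY (n : nat) (tau : sym) (h : R -> R) : {within `[0, 1], continuous h} ->
  (forall x, Weq n tau (fun y => \int[mu]_(t in `[0, 1]) h t - ext h y) x) ->
  Ytau n tau (fun phi => - Lap h phi).
Proof.
move=> ch hW; set c := \int[mu]_(t in `[0, 1]) h t.
apply: (mkY (g := fun x => c - h x)).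
- by apply: wcD; [exact: wcC|exact: wcN].
- by rewrite int01_sub // subrr.
- have -> : ext (fun x => c - h x) = (fun y => c - ext h y).
    by apply/funext => y; rewrite !extE.
  exact: hW.
- exact: Yeq_shift.
Qed.

Lemma Xa_facts (n : nat) (v : R -> R) : Xtau n Sa v ->
  {within `[0, 1], continuous v} /\ (forall x, ext v (x + n%:R^-1) = - ext v x).
Proof.
move=> [xv hv]; split; first exact: Xsp_cont.
by move=> x; rewrite -(hv x) /Weq /Tn opprK.
Qed.

Lemma Xb_facts (n : nat) (v : R -> R) : (0 < n)%N -> Xtau n Sb v ->
  {within `[0, 1], continuous v} /\ (forall x, ext v (x + 1) = (-1) ^+ n * ext v x).
Proof.
move=> hn [xv hv]; split; first exact: Xsp_cont.
exact: b_1.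
Qed.

Lemma Xc_facts (n : nat) (v : R -> R) : (0 < n)%N -> Xtau n Sc v ->
  {within `[0, 1], continuous v} /\ (forall x, ext v (x + 1) = - (-1) ^+ n * ext v x).
Proof.
move=> hn [xv hv]; split; first exact: Xsp_cont.
exact: c_1.
Qed.

Lemma Xab_facts (n : nat) (v : R -> R) : (0 < n)%N ->
  Xsum (Xtau n Sa) (Xtau n Sb) v ->
  {within `[0, 1], continuous v} /\ (forall x, ext v (x + 1) = (-1) ^+ n * ext v x).
Proof.
move=> hn [v1 [v2 [h1 [h2 e]]]].
have [c1 s1] := Xa_facts h1.
have [c2 s2] := Xb_facts hn h2.
have eV : forall x, ext v x = ext v1 x + ext v2 x.
  by move=> x; rewrite !extE e //; exact: tri_itv.
split.
  apply: (wcE (wcD c1 c2)) => x; rewrite inE /= in_itv /= => hx.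
  by rewrite e.
by move=> x; rewrite !eV (a_1 hn s1) s2 mulrDr.
Qed.

Lemma hextE (f : R -> R) (lam : R) (u v w : R -> R) (x : R) :
  ext (fun y => lam * d2 f (u y) * v y * w y) x =
  lam * d2 f (ext u x) * ext v x * ext w x.
Proof. by rewrite !extE. Qed.

Lemma hcont (f : R -> R) (lam : R) (u v w : R -> R) : smooth f ->
  {within `[0, 1], continuous u} -> {within `[0, 1], continuous v} ->
  {within `[0, 1], continuous w} ->
  {within `[0, 1], continuous (fun y => lam * d2 f (u y) * v y * w y)}.
Proof.
move=> sf cu cv cw; apply: wcM => //; apply: wcM => //; apply: wcM; first exact: wcC.
exact: (wcO cu (d2_cont sf)).
Qed.

End F.

Lemma term_aux (R : realType) (t c lam a b w : R) : t * t = 1 ->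
  t * (c - lam * (t * a) * (t * b) * w) = t * c - lam * a * b * (t * w).
Proof.
move=> ht.
have -> : lam * (t * a) * (t * b) * w = (t * t) * (lam * a * b * w) by ring.
by rewrite ht mul1r; ring.
Qed.

End Helpers.
Import Helpers.

Local Open Scope ring_scope.

Theorem lemma2p14 (R : realType) (n : nat) (sigma : R) (f : R -> R)
  (lam : R) (u : R -> R) :
  (0 < n)%N -> 0 < sigma -> smooth f -> odd_fun f -> Xtau n Sa u ->
  (* (i) *)
  (forall v w, Xtau n Sa v -> Xtau n Sa w ->
     Ytau n Sa (DuuF f lam u v w)) /\
  (* (ii) *)
  (forall v w, Xsum (Xtau n Sa) (Xtau n Sb) v -> Xsum (Xtau n Sa) (Xtau n Sb) w ->
     Ysum (Ytau n Sa) (Ytau n Sb) (DuuF f lam u v w)) /\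
  (* (iii) *)
  (forall v w, Xtau n Sa v -> Xtau n Sb w ->
     Ytau n Sb (DuuF f lam u v w)) /\
  (* (iv) *)
  (forall v w, Xtau n Sc v -> Xtau n Sc w ->
     Ysum (Ytau n Sa) (Ytau n Sb) (DuuF f lam u v w)) /\
  (* (v) *)
  (forall v w, Xsum (Xtau n Sa) (Xtau n Sb) v -> Xtau n Sc w ->
     Ytau n Sc (DuuF f lam u v w)).
Proof.
move=> hn _ sf hf hu.
have op : forall y, d2 f (- y) = - d2 f y := d2_odd sf hf.
have [cu sU] := Xa_facts hu.
have sS : (-1) ^+ n * (-1) ^+ n = 1 :> R := ss R n.
have pS : forall y, d2 f ((-1) ^+ n * y) = (-1) ^+ n * d2 f y := odd_sign op n.
have sU1 : forall x, ext u (x + 1) = (-1) ^+ n * ext u x := a_1 hn sU.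
have H1 : forall (v w : R -> R) (al be : R),
    (forall x, ext v (x + 1) = al * ext v x) ->
    (forall x, ext w (x + 1) = be * ext w x) ->
    forall x, ext (fun y => lam * d2 f (u y) * v y * w y) (x + 1) =
      ((-1) ^+ n * al * be) * ext (fun y => lam * d2 f (u y) * v y * w y) x.
  by move=> v w al be sv sw x; rewrite !hextE sU1 pS sv sw; ring.
have dI : 0 <= (n%:R^-1 : R) <= 2 := d_itv R hn.
have oI : 0 <= (1 : R) <= 2 by rewrite ler01 ler1n.
split; [|split; [|split; [|split]]].
- move=> v w hv hw.
  have [cv sV] := Xa_facts hv; have [cw sW] := Xa_facts hw.
  have ch := hcont (lam := lam) sf cu cv cw.
  have sH : forall x, ext (fun y => lam * d2 f (u y) * v y * w y) (x + n%:R^-1) =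
      -1 * ext (fun y => lam * d2 f (u y) * v y * w y) x.
    by move=> x; rewrite !hextE sU sV sW op; ring.
  have hc := mean01 ch dI sH.
  apply: partY => // x; apply/WeqA; rewrite sH; lra.
- move=> v w hv hw.
  have [cv sV] := Xab_facts hn hv; have [cw sW] := Xab_facts hn hw.
  apply: key_ab => //; first exact: hcont.
  by move=> x; rewrite (H1 _ _ _ _ sV sW) sS mul1r.
- move=> v w hv hw.
  have [cv sV] := Xa_facts hv; have [cw sW] := Xb_facts hn hw.
  have ch := hcont (lam := lam) sf cu cv cw.
  have sH := H1 _ _ _ _ (a_1 hn sV) sW.
  have hc := mean01 ch oI sH.
  rewrite sS mul1r in hc.
  apply: partY => // x; apply/WeqB.
  have Uk := a_k sU; have Vk := a_k sV.
  have sq : forall i : nat, (-1) ^+ i * (-1) ^+ i = 1 :> R.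
    by move=> i; rewrite -exprMn mulrNN mulr1 expr1n.
  set c := \int[_]_(t in _) _ in hc *.
  under eq_bigr => i _ do rewrite hextE Uk Vk (odd_sign op) term_aux ?sq //.
  rewrite sumrB -mulr_suml -mulr_sumr.
  have -> : \sum_(k < n) (-1) ^+ k * ext w (x + k%:R * n%:R^-1) = 0.
    by apply/WeqB; case: hw.
  rewrite mulr0 subr0.
  have := sig2 R n; move: (\sum_(i < n) (-1) ^+ i) => sg hsg.
  have : 2 * (sg * c) = 0 by rewrite mulrA hsg.
  lra.
- move=> v w hv hw.
  have [cv sV] := Xc_facts hn hv; have [cw sW] := Xc_facts hn hw.
  apply: key_ab => //; first exact: hcont.
  have e : (-1) ^+ n * - (-1) ^+ n * - (-1) ^+ n = (-1) ^+ n :> R.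
    by rewrite -mulrA mulrNN sS mulr1.
  by move=> x; rewrite (H1 _ _ _ _ sV sW) e.
- move=> v w hv hw.
  have [cv sV] := Xab_facts hn hv; have [cw sW] := Xc_facts hn hw.
  have ch := hcont (lam := lam) sf cu cv cw.
  have sH := H1 _ _ _ _ sV sW.
  rewrite sS mul1r in sH.
  have hc := mean01 ch oI sH.
  apply: partY => // x; apply/(WeqC hn); rewrite /= sH.
  set c := \int[_]_(t in _) _ in hc *.
  set E := ext _ x.
  have : (-1) ^+ n * c = - c by lra.
  move: ((-1) ^+ n) sS => t ht e.
  rewrite mulrBr e mulrA mulrN ht mulN1r; ring.
Qed.
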